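(* Let $\mathcal Q=\{I_j\}_{j\in\mathbb Z}$ be a bounded geometry partition of $\mathbb R$ (identified with $\partial\mathbb H_r$ via $iy\mapsto y$) with constant $C$, normalized so that $I_0=(-1,1)$, and let $1<M<\infty$. Then there is a bounded geometry partition $\mathcal Q'=\{I'_j\}_{j\in\mathbb Z}$ of $\mathbb R$ such that: (1) $I'_0=I_0$; (2) $I'_{-j}=-I'_j$ for all $j$; (3) $|I'_j|$ is a non-increasing function of $|j|$; (4) every $|I'_j|$ is an integer power of $2$; (5) if $I'\in\mathcal Q'\setminus\{I_0\}$ intersects $I\in\mathcal Q$ then $|I'|<|I|/M$; (6) the bounded geometry constant of $\mathcal Q'$ is bounded above by a constant depending only on $M$ and $C$.
   Context: A partition of a line is a locally finite collection of disjoint open intervals whose closures cover the line. It has bounded geometry with constant $C$ if $|I|/|J|\le C$ for every pair of adjacent intervals (sharing an endpoint). *)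

(* Defs.v *)
From Stdlib Require Export Reals ZArith.
Open Scope R_scope.

(* A Z-indexed family of open intervals I_j = (l j, r j). *)

Definition is_partition (l r : Z -> R) : Prop :=
  (forall j, l j < r j) /\
  (forall j k, j <> k -> forall x, ~ (l j < x < r j /\ l k < x < r k)) /\
  (forall x, exists eps, 0 < eps /\
     exists N : nat, forall j,
       (exists y, l j < y < r j /\ x - eps < y < x + eps) ->
       (Z.abs j <= Z.of_nat N)%Z) /\
  (forall x, exists j, l j <= x <= r j).

Definition Z_ordered (l r : Z -> R) : Prop :=
  forall j, r j = l (j + 1)%Z.

Definition bounded_geometry (l r : Z -> R) (C : R) : Prop :=
  forall j k, (r j = l k \/ r k = l j) ->
    (r j - l j) / (r k - l k) <= C.

(* Main.v *)
Require Import Defs.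
From Stdlib Require Import Reals ZArith Lra Lia Classical ClassicalEpsilon.
Open Scope R_scope.

Definition flog2 (y : R) : Z := (up (ln y / ln 2) - 1)%Z.

Lemma pf_spec (y : R) : 0 < y ->
  powerRZ 2 (flog2 y) <= y /\ y < 2 * powerRZ 2 (flog2 y).
Proof.
  intros Hy. pose proof ln_lt_2 as Hl2.
  set (t := ln y / ln 2).
  destruct (archimed t) as [H1 H2].
  rewrite powerRZ_Rpower by lra. unfold Rpower, flog2. fold t.
  rewrite minus_IZR.
  assert (Ht : t * ln 2 = ln y) by (unfold t; field; lra).
  assert (E : exp (t * ln 2) = y) by (rewrite Ht; apply exp_ln; lra).
  split.
  - destruct (Req_dec (IZR (up t) - 1) t) as [Heq|Hne].
    + rewrite Heq, E. lra.
    + left. rewrite <- E. apply exp_increasing.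
      apply Rmult_lt_compat_r; lra.
  - replace 2 with (exp (ln 2)) at 1 by (apply exp_ln; lra).
    rewrite <- exp_plus. rewrite <- E. apply exp_increasing.
    replace (ln 2 + (IZR (up t) - 1) * ln 2) with (IZR (up t) * ln 2) by ring.
    apply Rmult_lt_compat_r; lra.
Qed.

Lemma lmono (l r : Z -> R) : (forall j, l j < r j) -> Z_ordered l r ->
  forall i j, (i < j)%Z -> l i < l j.
Proof.
  intros Hlr Hz i j Hij.
  assert (H : forall n:nat, l i < l (i + Z.of_nat (S n))%Z).
  { induction n.
    - replace (i + Z.of_nat 1)%Z with (i+1)%Z by lia. rewrite <- Hz. apply Hlr.
    - replace (i + Z.of_nat (S (S n)))%Z with ((i + Z.of_nat (S n)) + 1)%Z by lia.
      rewrite <- Hz. specialize (Hlr (i + Z.of_nat (S n))%Z). lra. }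
  replace j with (i + Z.of_nat (S (Z.to_nat (j - i - 1))))%Z by lia. apply H.
Qed.

Lemma lmono_le (l r : Z -> R) : (forall j, l j < r j) -> Z_ordered l r ->
  forall i j, (i <= j)%Z -> l i <= l j.
Proof.
  intros H1 H2 i j Hij. destruct (Z.eq_dec i j). subst; lra.
  left; apply (lmono l r); auto; lia.
Qed.

Lemma rl_le (l r : Z -> R) : (forall j, l j < r j) -> Z_ordered l r ->
  forall i j, (i < j)%Z -> r i <= l j.
Proof.
  intros H1 H2 i j Hij. rewrite H2. apply (lmono_le l r); auto; lia.
Qed.

Lemma finite_min (f : Z -> R) (a : Z) (n : nat) : exists k,
  (a <= k <= a + Z.of_nat n)%Z /\ forall j, (a <= j <= a + Z.of_nat n)%Z -> f k <= f j.
Proof.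
  induction n.
  - exists a. split. lia. intros j Hj. assert (j = a) by lia. subst; lra.
  - destruct IHn as [k [Hk Hmin]].
    destruct (Rle_dec (f k) (f (a + Z.of_nat (S n))%Z)).
    + exists k. split. lia. intros j Hj.
      destruct (Z.eq_dec j (a + Z.of_nat (S n))). subst; lra. apply Hmin; lia.
    + exists (a + Z.of_nat (S n))%Z. split. lia. intros j Hj.
      destruct (Z.eq_dec j (a + Z.of_nat (S n))). subst; lra.
      specialize (Hmin j ltac:(lia)). lra.
Qed.

Lemma bg_mul (l r : Z -> R) C : (forall j, l j < r j) -> bounded_geometry l r C ->
  forall j k, (r j = l k \/ r k = l j) -> r j - l j <= C * (r k - l k).
Proof.
  intros Hlr HB j k Hadj. specialize (HB j k Hadj). pose proof (Hlr k).
  replace (r j - l j) with ((r j - l j) / (r k - l k) * (r k - l k)) by (field; lra).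
  apply Rmult_le_compat_r; lra.
Qed.

Definition meets (l r : Z -> R) (x : R) (k : Z) : Prop := l k < x /\ -x < r k.

Lemma search_up (b : Z -> R) (x : R) (n : nat) : forall j0,
  b j0 < x -> x <= b (j0 + Z.of_nat n)%Z ->
  exists i, (j0 <= i < j0 + Z.of_nat n)%Z /\ b i < x /\ x <= b (i+1)%Z.
Proof.
  induction n; intros j0 H1 H2.
  - replace (j0 + Z.of_nat 0)%Z with j0 in H2 by lia. lra.
  - destruct (Rlt_dec (b (j0+1)%Z) x).
    + destruct (IHn (j0+1)%Z r) as [i [Hi1 Hi2]].
      replace (j0 + 1 + Z.of_nat n)%Z with (j0 + Z.of_nat (S n))%Z by lia. auto.
      exists i. split. lia. auto.
    + exists j0. split. lia. split; auto. lra.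
Qed.

Lemma key_right (l r : Z -> R) (C x delta mu : R) :
  (forall j, l j < r j) -> Z_ordered l r -> bounded_geometry l r C ->
  l 0%Z = -1 -> 1 <= C -> 0 < x -> 0 <= delta -> C * delta < mu ->
  (forall k, meets l r x k -> mu <= r k - l k) ->
  forall k, x <= l k -> l k < x + delta -> mu <= C * (r k - l k).
Proof.
  intros Hlr Hz HB Hl0 HC Hx Hd Hdm Hmu k Hk1 Hk2.
  assert (Hkpos : (0 < k)%Z).
  { destruct (Z_lt_le_dec 0 k); auto.
    pose proof (lmono_le l r Hlr Hz k 0 l0). lra. }
  destruct (search_up l x (Z.to_nat k) 0%Z) as [i [Hi [Hi1 Hi2]]].
  lra. replace (0 + Z.of_nat (Z.to_nat k))%Z with k by lia. auto.
  assert (Hm : meets l r x i).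
  { split; auto. rewrite Hz. lra. }
  pose proof (Hmu i Hm) as Hmi.
  pose proof (bg_mul l r C Hlr HB i (i+1)%Z (or_introl (Hz i))) as Hb.
  destruct (Z.eq_dec (i+1) k) as [E|E].
  - subst k. lra.
  - assert (Hlt : (i + 1 < k)%Z) by lia.
    pose proof (rl_le l r Hlr Hz (i+1) k Hlt).
    assert (delta < r (i+1)%Z - l (i+1)%Z).
    { destruct (Rlt_dec delta (r (i+1)%Z - l (i+1)%Z)); auto.
      exfalso. assert (C * (r (i+1)%Z - l (i+1)%Z) <= C * delta).
      apply Rmult_le_compat_l; lra. lra. }
    lra.
Qed.

Lemma key_left (l r : Z -> R) (C x delta mu : R) :
  (forall j, l j < r j) -> Z_ordered l r -> bounded_geometry l r C ->
  r 0%Z = 1 -> 1 <= C -> 0 < x -> 0 <= delta -> C * delta < mu ->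
  (forall k, meets l r x k -> mu <= r k - l k) ->
  forall k, -(x + delta) < r k -> r k <= - x -> mu <= C * (r k - l k).
Proof.
  intros Hlr Hz HB Hr0 HC Hx Hd Hdm Hmu k Hk1 Hk2.
  set (l' := fun j => - r (- j)%Z). set (r' := fun j => - l (- j)%Z).
  assert (H := key_right l' r' C x delta mu).
  assert (E : r' (- k)%Z - l' (- k)%Z = r k - l k).
  { unfold r', l'. rewrite Z.opp_involutive. ring. }
  rewrite <- E. apply H; auto.
  - intros j; unfold l', r'. specialize (Hlr (-j)%Z). lra.
  - intros j; unfold l', r'. rewrite Hz. f_equal. f_equal. f_equal. lia.
  - intros j k' Hadj. unfold l', r'.
    replace (- l (- j)%Z - - r (- j)%Z) with (r (-j)%Z - l (-j)%Z) by ring.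
    replace (- l (- k')%Z - - r (- k')%Z) with (r (-k')%Z - l (-k')%Z) by ring.
    apply HB. unfold l', r' in Hadj. destruct Hadj; [right|left]; lra.
  - unfold l'. simpl. lra.
  - intros k' [H1 H2]. unfold l', r' in *.
    replace (- l (- k')%Z - - r (- k')%Z) with (r (-k')%Z - l (-k')%Z) by ring.
    apply Hmu. split; lra.
  - unfold l'. rewrite Z.opp_involutive. lra.
  - unfold l'. rewrite Z.opp_involutive. lra.
Qed.

Lemma key (l r : Z -> R) (C x delta mu : R) :
  (forall j, l j < r j) -> Z_ordered l r -> bounded_geometry l r C ->
  l 0%Z = -1 -> r 0%Z = 1 -> 1 <= C -> 0 < x -> 0 <= delta -> C * delta < mu ->
  (forall k, meets l r x k -> mu <= r k - l k) ->
  forall k, l k < x + delta -> -(x + delta) < r k -> mu <= C * (r k - l k).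
Proof.
  intros Hlr Hz HB Hl0 Hr0 HC Hx Hd Hdm Hmu k Hk1 Hk2.
  destruct (Rlt_dec (l k) x) as [a|a].
  - destruct (Rlt_dec (-x) (r k)) as [b|b].
    + pose proof (Hmu k (conj a b)). pose proof (Hlr k).
      assert (r k - l k <= C * (r k - l k)).
      { rewrite <- (Rmult_1_l (r k - l k)) at 1. apply Rmult_le_compat_r; lra. }
      lra.
    + apply (key_left l r C x delta mu); auto; lra.
  - apply (key_right l r C x delta mu); auto; lra.
Qed.

Lemma m_exists (l r : Z -> R) : is_partition l r -> Z_ordered l r ->
  l 0%Z = -1 -> r 0%Z = 1 -> forall x, 1 <= x -> exists v, 0 < v /\
  (exists k, meets l r x k /\ r k - l k = v) /\
  (forall k, meets l r x k -> v <= r k - l k).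
Proof.
  intros [Hlr [_ [_ Hcov]]] Hz Hl0 Hr0 x Hx.
  destruct (Hcov (-x-1)) as [j1 [Hj1a Hj1b]].
  destruct (Hcov (x+1)) as [j2 [Hj2a Hj2b]].
  assert (Hrange : forall k, meets l r x k -> (j1 <= k <= j2)%Z).
  { intros k [H1 H2]. split.
    - destruct (Z_lt_le_dec k j1); auto.
      pose proof (rl_le l r Hlr Hz k j1 l0). lra.
    - destruct (Z_lt_le_dec j2 k); auto.
      pose proof (rl_le l r Hlr Hz j2 k l0). lra. }
  assert (H0 : meets l r x 0%Z) by (split; lra).
  pose proof (Hrange 0%Z H0) as Hr0'.
  set (g := fun k => if Rlt_dec (l k) x then if Rlt_dec (-x) (r k) then r k - l k else 2 else 2).
  assert (Hg : forall k, meets l r x k -> g k = r k - l k).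
  { intros k [H1 H2]. unfold g. destruct (Rlt_dec (l k) x); try lra.
    destruct (Rlt_dec (-x) (r k)); lra. }
  destruct (finite_min g j1 (Z.to_nat (j2 - j1))) as [ks [Hks Hmin]].
  exists (g ks). split; [|split].
  - unfold g. destruct (Rlt_dec (l ks) x); [destruct (Rlt_dec (-x) (r ks))|];
    try lra. pose proof (Hlr ks). lra.
  - destruct (Rlt_dec (l ks) x) as [a|a]; [destruct (Rlt_dec (-x) (r ks)) as [b|b]|].
    + exists ks. split. split; auto. rewrite Hg; auto. split; auto.
    + exists 0%Z. split; auto. unfold g. destruct (Rlt_dec (l ks) x); try lra.
      destruct (Rlt_dec (-x) (r ks)); try lra.
    + exists 0%Z. split; auto. unfold g. destruct (Rlt_dec (l ks) x); try lra.
  - intros k Hk. rewrite <- Hg by auto. apply Hmin. pose proof (Hrange k Hk). lia.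
Qed.

Fixpoint aseq (g : R -> R) (n : nat) : R * R :=
  match n with
  | O => (2, 1)
  | S n => let ap := aseq g n in
           let a' := Rmin (fst ap) (g (snd ap)) in (a', snd ap + a')
  end.
Definition A g n := fst (aseq g n).
Definition P g n := snd (aseq g n).
Lemma A_S g n : A g (S n) = Rmin (A g n) (g (P g n)). Proof. reflexivity. Qed.
Lemma P_S g n : P g (S n) = P g n + A g (S n). Proof. reflexivity. Qed.
Lemma A_0 g : A g 0 = 2. Proof. reflexivity. Qed.
Lemma P_0 g : P g 0 = 1. Proof. reflexivity. Qed.

Lemma A_pos g : (forall x, 0 < g x) -> forall n, 0 < A g n.
Proof.
  intros Hg n; induction n. rewrite A_0; lra.
  rewrite A_S. apply Rmin_case; auto.
Qed.

Lemma A_anti g : forall n n', (n <= n')%nat -> A g n' <= A g n.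
Proof.
  intros n n' H; induction H. lra. rewrite A_S. pose proof (Rmin_l (A g m) (g (P g m))). lra.
Qed.

Lemma P_mono g : (forall x, 0 < g x) -> forall n n', (n <= n')%nat -> P g n <= P g n'.
Proof.
  intros Hg n n' H; induction H. lra. rewrite P_S. pose proof (A_pos g Hg (S m)). lra.
Qed.

Lemma A_pow2 g : (forall x, exists e, g x = powerRZ 2 e) -> forall n, exists e, A g n = powerRZ 2 e.
Proof.
  intros Hg n; induction n. exists 1%Z. rewrite A_0. simpl. ring.
  rewrite A_S. apply Rmin_case; auto.
Qed.

Definition bnd g (j : Z) : R :=
  if Z.ltb 0 j then P g (Z.to_nat (j - 1)) else - P g (Z.to_nat (- j)).

Lemma bnd_pos g n : bnd g (Z.of_nat (S n)) = P g n.
Proof. unfold bnd. destruct (Z.ltb_spec 0 (Z.of_nat (S n))); try lia. f_equal. lia. Qed.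
Lemma bnd_neg g n : bnd g (- Z.of_nat n) = - P g n.
Proof. unfold bnd. destruct (Z.ltb_spec 0 (- Z.of_nat n)); try lia. f_equal. f_equal. lia. Qed.

Lemma bnd_len g j : bnd g (j+1) - bnd g j = A g (Z.abs_nat j).
Proof.
  destruct (Z_lt_le_dec 0 j).
  - replace (j+1)%Z with (Z.of_nat (S (Z.to_nat j))) by lia.
    replace j with (Z.of_nat (S (Z.to_nat (j-1)))) at 2 by lia.
    rewrite !bnd_pos. replace (Z.to_nat j) with (S (Z.to_nat (j-1))) by lia.
    rewrite P_S. replace (Z.abs_nat j) with (S (Z.to_nat (j-1))) by lia. ring.
  - destruct (Z.eq_dec j 0).
    + subst. replace (0+1)%Z with (Z.of_nat (S 0)) by lia. rewrite bnd_pos.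
      replace 0%Z with (- Z.of_nat 0)%Z at 1 by lia. rewrite bnd_neg.
      simpl Z.abs_nat. rewrite P_0, A_0. lra.
    + replace (j+1)%Z with (- Z.of_nat (Z.to_nat (-j-1)))%Z by lia.
      replace j with (- Z.of_nat (S (Z.to_nat (-j-1))))%Z at 2 by lia.
      rewrite !bnd_neg. rewrite P_S.
      replace (Z.abs_nat j) with (S (Z.to_nat (-j-1))) by lia. ring.
Qed.

Lemma bnd_sym g j : bnd g (- j) = - bnd g (j+1).
Proof.
  unfold bnd. destruct (Z.ltb_spec 0 (-j)); destruct (Z.ltb_spec 0 (j+1)); try lia.
  - rewrite Ropp_involutive. f_equal. lia.
  - f_equal. f_equal. lia.
Qed.

Lemma search_cov (b : Z -> R) (x : R) (n : nat) : forall j0,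
  b j0 <= x -> x < b (j0 + Z.of_nat n)%Z -> exists j, b j <= x <= b (j+1)%Z.
Proof.
  induction n; intros j0 H1 H2.
  - replace (j0 + Z.of_nat 0)%Z with j0 in H2 by lia. lra.
  - destruct (Rle_dec (b (j0+1)%Z) x).
    + apply (IHn (j0+1)%Z r).
      replace (j0 + 1 + Z.of_nat n)%Z with (j0 + Z.of_nat (S n))%Z by lia. auto.
    + exists j0. lra.
Qed.

Lemma bnd_part g : (forall x, 0 < g x) -> (forall B, exists n, B < P g n) ->
  is_partition (bnd g) (fun j => bnd g (j+1)%Z) /\ Z_ordered (bnd g) (fun j => bnd g (j+1)%Z).
Proof.
  intros Hg Hunb.
  assert (Hlr : forall j, bnd g j < bnd g (j+1)%Z).
  { intros j. pose proof (bnd_len g j). pose proof (A_pos g Hg (Z.abs_nat j)). lra. }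
  assert (Hz : Z_ordered (bnd g) (fun j => bnd g (j+1)%Z)) by (intro; reflexivity).
  assert (Hle : forall i j, (i <= j)%Z -> bnd g i <= bnd g j)
    by (apply (lmono_le _ _ Hlr Hz)).
  split; auto. split; [auto|split; [|split]].
  - intros j k Hjk x [[H1 H2] [H3 H4]].
    destruct (Z_lt_le_dec j k).
    + pose proof (Hle (j+1)%Z k ltac:(lia)). lra.
    + pose proof (Hle (k+1)%Z j ltac:(lia)). lra.
  - intros x. exists 1. split; [lra|].
    destruct (Hunb (Rabs x + 1)) as [n Hn]. exists (S (S n)). intros j [y [[H1 H2] [H3 H4]]].
    pose proof (Rle_abs x). pose proof (Rle_abs (-x)). rewrite Rabs_Ropp in *.
    pose proof (P_mono g Hg n (S n) ltac:(lia)).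
    destruct (Z_le_gt_dec (Z.abs j) (Z.of_nat (S (S n)))); auto. exfalso.
    destruct (Z_lt_le_dec 0 j).
    + pose proof (Hle (Z.of_nat (S (S n))) j ltac:(lia)). rewrite bnd_pos in H6. lra.
    + pose proof (Hle (j+1)%Z (- Z.of_nat (S n))%Z ltac:(lia)). rewrite bnd_neg in H6. lra.
  - intros x. destruct (Hunb (Rabs x)) as [n Hn].
    pose proof (Rle_abs x). pose proof (Rle_abs (-x)). rewrite Rabs_Ropp in *.
    apply (search_cov (bnd g) x (S n + S n) (- Z.of_nat n)%Z).
    + rewrite bnd_neg. lra.
    + replace (- Z.of_nat n + Z.of_nat (S n + S n))%Z with (Z.of_nat (S (S n))) by lia.
      rewrite bnd_pos. pose proof (P_mono g Hg n (S n) ltac:(lia)). lra.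
Qed.

Theorem mainTheorem17 :
  forall (C M : R), 1 < M ->
  exists K : R,
  forall (l r : Z -> R),
    is_partition l r -> Z_ordered l r -> bounded_geometry l r C ->
    l 0%Z = -1 -> r 0%Z = 1 ->
    exists (l' r' : Z -> R),
      is_partition l' r' /\ Z_ordered l' r' /\
      (l' 0%Z = l 0%Z /\ r' 0%Z = r 0%Z) /\
      (forall j, l' (- j)%Z = - r' j /\ r' (- j)%Z = - l' j) /\
      (forall j k, (Z.abs j <= Z.abs k)%Z -> r' k - l' k <= r' j - l' j) /\
      (forall j, exists n : Z, r' j - l' j = powerRZ 2 n) /\
      (forall j k, ~ (l' j = l 0%Z /\ r' j = r 0%Z) ->
         (exists x, l' j < x < r' j /\ l k < x < r k) ->
         r' j - l' j < (r k - l k) / M) /\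
      bounded_geometry l' r' K.
Proof.
  intros C M HM. exists (2*C + 4*M*C*C + 1).
  intros l r Hpart Hz HB Hl0 Hr0.
  pose proof Hpart as [Hlr _].
  assert (HC : 1 <= C).
  { pose proof (bg_mul l r C Hlr HB 0 1 (or_introl (Hz 0%Z))).
    pose proof (bg_mul l r C Hlr HB 1 0 (or_intror (Hz 0%Z))).
    pose proof (Hlr 1%Z). rewrite Hl0, Hr0 in *. nra. }
  assert (Hex : forall x, exists v, 1 <= x -> 0 < v /\
    (exists k, meets l r x k /\ r k - l k = v) /\
    (forall k, meets l r x k -> v <= r k - l k)).
  { intros x. destruct (Rle_dec 1 x).
    - destruct (m_exists l r Hpart Hz Hl0 Hr0 x r0) as [v Hv]. exists v; auto.
    - exists 0. intros; lra. }
  set (m := fun x => proj1_sig (constructive_indefinite_description _ (Hex x))).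
  assert (Hm : forall x, 1 <= x -> 0 < m x /\
    (exists k, meets l r x k /\ r k - l k = m x) /\
    (forall k, meets l r x k -> m x <= r k - l k)).
  { intros x Hx. unfold m. destruct (constructive_indefinite_description _ (Hex x)). simpl. auto. }
  clearbody m.
  assert (mmono : forall x y, 1 <= x <= y -> m y <= m x).
  { intros x y Hxy. destruct (Hm x ltac:(lra)) as [_ [[k [[Hk1 Hk2] Hk3]] _]].
    destruct (Hm y ltac:(lra)) as [_ [_ Hmin]]. rewrite <- Hk3. apply Hmin. split; lra. }
  assert (mstep : forall x d, 1 <= x -> 0 <= d -> C * d < m x -> m x <= C * m (x + d)).
  { intros x d Hx Hd Hdm. destruct (Hm (x+d) ltac:(lra)) as [_ [[k [[Hk1 Hk2] Hk3]] _]].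
    rewrite <- Hk3. apply (key l r C x d (m x)); auto; try lra.
    apply (Hm x Hx). }
  assert (m1 : 2 <= C * m 1).
  { destruct (Hm 1 ltac:(lra)) as [_ [[k [[Hk1 Hk2] Hk3]] _]]. rewrite <- Hk3.
    destruct (Z_lt_le_dec 1 k).
    { pose proof (lmono_le l r Hlr Hz 2 k ltac:(lia)). pose proof (Hlr 1%Z).
      pose proof (Hz 1%Z). pose proof (Hz 0%Z). simpl in *. lra. }
    destruct (Z_lt_le_dec k (-1)).
    { pose proof (rl_le l r Hlr Hz k (-1) ltac:(lia)). pose proof (Hlr (-1)%Z).
      pose proof (Hz (-1)%Z). simpl in *. lra. }
    assert (k = 0 \/ k = 1 \/ k = -1)%Z as [E|[E|E]] by lia; subst k.
    - rewrite Hl0, Hr0. lra.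
    - pose proof (bg_mul l r C Hlr HB 0 1 (or_introl (Hz 0%Z))). rewrite Hl0, Hr0 in H. lra.
    - pose proof (bg_mul l r C Hlr HB 0 (-1) (or_intror (Hz (-1)%Z))). rewrite Hl0, Hr0 in H. lra. }
  set (D := 2 * M * C).
  assert (HD : 0 < D) by (unfold D; nra).
  set (g := fun p => powerRZ 2 (flog2 (m p / D))).
  assert (gpos : forall x, 0 < g x) by (intros; apply powerRZ_lt; lra).
  assert (gspec : forall p, 1 <= p -> g p <= m p / D /\ m p / D < 2 * g p).
  { intros p Hp. apply pf_spec. destruct (Hm p Hp). apply Rdiv_lt_0_compat; auto. }
  assert (Pge1 : forall n, 1 <= P g n).
  { intros n. rewrite <- (P_0 g). apply P_mono; auto. lia. }
  assert (Ainv : forall n, A g (S n) * D <= m (P g n)).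
  { intros n. pose proof (Rmin_r (A g n) (g (P g n))).
    destruct (gspec (P g n) (Pge1 n)).
    assert (m (P g n) / D * D = m (P g n)) by (field; lra).
    assert (A g (S n) * D <= m (P g n) / D * D) by (rewrite A_S; apply Rmult_le_compat_r; lra).
    lra. }
  assert (Hunb : forall B, exists n, B < P g n).
  { intros B. apply NNPP. intros Hn.
    assert (HB' : forall n, P g n <= B).
    { intros n. apply Rnot_lt_le. apply (not_ex_all_not _ _ Hn n). }
    assert (B1 : 1 <= B) by (specialize (HB' 0%nat); rewrite P_0 in HB'; lra).
    set (cB := m B / D).
    assert (HcB : 0 < cB) by (unfold cB; destruct (Hm B B1); apply Rdiv_lt_0_compat; auto).
    assert (Hg : forall n, cB / 2 < g (P g n)).
    { intros n. destruct (gspec (P g n) (Pge1 n)).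
      assert (cB <= m (P g n) / D).
      { unfold cB, Rdiv. apply Rmult_le_compat_r. left; apply Rinv_0_lt_compat; auto.
        apply mmono. split; auto. }
      lra. }
    set (al := Rmin 2 (cB / 2)).
    assert (Hal : 0 < al) by (unfold al; apply Rmin_case; lra).
    assert (HA : forall n, al <= A g n).
    { induction n. rewrite A_0. apply Rmin_l. rewrite A_S. apply Rmin_glb; auto.
      pose proof (Rmin_r 2 (cB/2)). specialize (Hg n). fold al in H. lra. }
    assert (HP : forall n, 1 + INR n * al <= P g n).
    { induction n. rewrite P_0. simpl. lra. rewrite P_S, S_INR. specialize (HA (S n)). lra. }
    destruct (archimed (B / al)) as [Hu _].
    assert (Hup : (0 <= up (B / al))%Z).
    { apply le_IZR. assert (0 < B / al) by (apply Rdiv_lt_0_compat; lra). lra. }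
    specialize (HP (Z.to_nat (up (B / al)))). specialize (HB' (Z.to_nat (up (B / al)))).
    rewrite INR_IZR_INZ, Z2Nat.id in HP by auto.
    assert (B / al * al = B) by (field; lra).
    assert (B / al * al < IZR (up (B / al)) * al) by (apply Rmult_lt_compat_r; lra).
    lra. }
  destruct (bnd_part g gpos Hunb) as [Hp' Hz'].
  set (K := 2*C + 4*M*C*C + 1).
  assert (HK : 1 <= K) by (unfold K; nra).
  assert (Hstep : forall n, A g n <= K * A g (S n)).
  { intros n. rewrite A_S. apply Rmin_case.
    - pose proof (A_pos g gpos n). nra.
    - destruct n.
      + rewrite A_0, P_0. destruct (gspec 1 ltac:(lra)) as [_ H2].
        assert (m 1 / D * D = m 1) by (field; lra).
        assert (m 1 < 2 * g 1 * D).
        { rewrite <- H. apply Rmult_lt_compat_r; auto. }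
        unfold D in H0. pose proof (gpos 1).
        assert (C * m 1 <= C * (2 * g 1 * (2 * M * C))) by (apply Rmult_le_compat_l; lra).
        unfold K. nra.
      + rewrite P_S. pose proof (Ainv n) as Hi. pose proof (Pge1 n).
        pose proof (A_pos g gpos (S n)). pose proof (Hm (P g n) H) as [Hmp _].
        assert (Hcd : C * A g (S n) < m (P g n)).
        { unfold D in Hi. nra. }
        pose proof (mstep (P g n) (A g (S n)) H ltac:(lra) Hcd) as Hms.
        destruct (gspec (P g n + A g (S n)) ltac:(lra)) as [_ H2].
        set (q := g (P g n + A g (S n))) in *.
        set (mm := m (P g n + A g (S n))) in *.
        assert (Heqm : mm / D * D = mm) by (field; lra).
        assert (mm < 2 * q * D) by (rewrite <- Heqm; apply Rmult_lt_compat_r; auto).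
        (* A (S n) * D <= m(P n) <= C mm < 2 C q D *)
        assert (C * mm < C * (2 * q * D)) by (apply Rmult_lt_compat_l; lra).
        assert (A g (S n) * D < (2 * C * q) * D) by (replace (2 * C * q * D) with (C * (2 * q * D)) by ring; lra).
        assert (A g (S n) < 2 * C * q) by (apply (Rmult_lt_reg_r D); auto).
        pose proof (gpos (P g n + A g (S n))) as Hq. fold q in Hq. unfold K.
        assert (0 <= (4*M*C*C+1)*q) by (apply Rmult_le_pos; nra). lra. }
  exists (bnd g), (fun j => bnd g (j+1)%Z).
  split; [auto|split; [auto|split; [|split; [|split; [|split; [|split]]]]]].
  - rewrite Hl0, Hr0. simpl. unfold bnd. simpl. rewrite P_0. lra.
  - intros j. split. apply bnd_sym. replace (- j + 1)%Z with (- (j - 1))%Z by lia.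
    rewrite bnd_sym. replace (j - 1 + 1)%Z with j by lia. reflexivity.
  - intros j k Hjk. rewrite !bnd_len. apply A_anti. lia.
  - intros j. rewrite bnd_len. apply A_pow2. intros x. eexists; reflexivity.
  - intros j k Hne [y [[Hy1 Hy2] [Hy3 Hy4]]].
    rewrite bnd_len.
    assert (Hj : (j <> 0)%Z).
    { intros E; subst j. apply Hne. rewrite Hl0, Hr0. unfold bnd; simpl. rewrite P_0. lra. }
    set (n := Z.to_nat (Z.abs j - 1)).
    assert (En : Z.abs_nat j = S n) by (unfold n; lia). rewrite En.
    pose proof (Ainv n) as Hi. pose proof (Pge1 n) as Hp1.
    pose proof (A_pos g gpos (S n)). pose proof (Hm (P g n) Hp1) as [Hmp [_ Hmin]].
    assert (Hcd : C * A g (S n) < m (P g n)) by (unfold D in Hi; nra).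
    assert (Hin : l k < P g n + A g (S n) /\ -(P g n + A g (S n)) < r k).
    { destruct (Z_lt_le_dec 0 j).
      - replace j with (Z.of_nat (S n)) in * by lia.
        replace (Z.of_nat (S n) + 1)%Z with (Z.of_nat (S (S n))) in * by lia.
        rewrite !bnd_pos, P_S in *. split; lra.
      - replace j with (- Z.of_nat (S n))%Z in * by lia.
        replace (- Z.of_nat (S n) + 1)%Z with (- Z.of_nat n)%Z in * by lia.
        rewrite !bnd_neg, P_S in *. split; lra. }
    destruct Hin as [Hin1 Hin2].
    pose proof (key l r C (P g n) (A g (S n)) (m (P g n)) Hlr Hz HB Hl0 Hr0 HC
       ltac:(lra) ltac:(lra) Hcd Hmin k Hin1 Hin2) as Hkey.
    pose proof (Hlr k).
    apply (Rmult_lt_reg_r M). lra.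
    replace ((r k - l k) / M * M) with (r k - l k) by (field; lra).
    unfold D in Hi.
    assert (A g (S n) * (2 * M * C) <= C * (r k - l k)) by lra.
    nra.
  - intros j k Hadj.
    assert (Hk : k = (j+1)%Z \/ j = (k+1)%Z).
    { destruct Hadj as [E|E].
      - destruct (Z.eq_dec k (j+1)); auto. exfalso.
        destruct (Z_lt_le_dec k (j+1)).
        + pose proof (lmono (bnd g) _ (proj1 Hp') Hz' k (j+1) l0). lra.
        + pose proof (lmono (bnd g) _ (proj1 Hp') Hz' (j+1) k ltac:(lia)). lra.
      - destruct (Z.eq_dec j (k+1)); auto. exfalso.
        destruct (Z_lt_le_dec j (k+1)).
        + pose proof (lmono (bnd g) _ (proj1 Hp') Hz' j (k+1) l0). lra.
        + pose proof (lmono (bnd g) _ (proj1 Hp') Hz' (k+1) j ltac:(lia)). lra. }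
    rewrite !bnd_len.
    assert (Hr : forall u v, (v = S u \/ u = S v)%nat -> A g u / A g v <= K).
    { intros u v [E|E]; subst.
      - pose proof (A_pos g gpos (S u)). apply (Rmult_le_reg_r (A g (S u))); auto.
        replace (A g u / A g (S u) * A g (S u)) with (A g u) by (field; lra). apply Hstep.
      - pose proof (A_pos g gpos v). pose proof (A_pos g gpos (S v)).
        apply (Rmult_le_reg_r (A g v)); auto.
        replace (A g (S v) / A g v * A g v) with (A g (S v)) by (field; lra).
        pose proof (A_anti g v (S v) ltac:(lia)). nra. }
    apply Hr. destruct Hk; subst; lia.
Qed.
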